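(* For all words $x,y$ over a finite alphabet $\Sigma$, $\mathrm{ged}(x,y)\le\mathrm{ned}(x,y)$.
   Context: An edit path from $x$ to $y$ is a sequence $p=(a_1,b_1)\cdots(a_n,b_n)$ with $(a_i,b_i)\in(\Sigma\cup\{\varepsilon\})^2\setminus\{(\varepsilon,\varepsilon)\}$, $a_1\cdots a_n=x$ and $b_1\cdots b_n=y$; $|p|=n$ and $\mathrm{wgt}(p)=|\{i:a_i\ne b_i\}|$ (uniform weights: no-ops cost $0$, substitutions, insertions and deletions cost $1$). $\mathrm{ed}(x,y)=\min_p\mathrm{wgt}(p)$; $\mathrm{ned}(x,y)=\min_p\mathrm{wgt}(p)/|p|$ (with $\mathrm{ned}(\varepsilon,\varepsilon)=0$); $\mathrm{ged}(x,y)=\frac{2\,\mathrm{ed}(x,y)}{|x|+|y|+\mathrm{ed}(x,y)}$ (with $\mathrm{ged}(\varepsilon,\varepsilon)=0$). *)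

(* Defs.v *)
From HB Require Import structures.
From mathcomp Require Import all_boot all_order all_algebra.
From mathcomp Require Import boolp classical_sets reals.
Set Implicit Arguments. Unset Strict Implicit. Unset Printing Implicit Defensive.
Import Order.TTheory GRing.Theory Num.Theory.

Section EditDistance.
Variable Sigma : finType.

(* an edit operation (a,b) with a,b in Sigma ∪ {ε}; ε is None *)
Definition edit_op := (option Sigma * option Sigma)%type.

Definition valid_op (o : edit_op) : bool := ~~ ((o.1 == None) && (o.2 == None)).

Definition concat_opt (s : seq (option Sigma)) : seq Sigma := pmap id s.

Definition edit_path (p : seq edit_op) (x y : seq Sigma) : Prop :=
  all valid_op p /\ concat_opt (map fst p) = x /\ concat_opt (map snd p) = y.

Definition wgt (p : seq edit_op) : nat := count (fun o : edit_op => o.1 != o.2) p.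

Definition trivial_path (x y : seq Sigma) : seq edit_op :=
  [seq (Some a, None) | a <- x] ++ [seq (None, Some b) | b <- y].

Lemma trivial_path_ok x y : edit_path (trivial_path x y) x y.
Proof.
rewrite /edit_path /trivial_path /concat_opt !map_cat -!map_comp.
split; first by rewrite all_cat; apply/andP; split; apply/allP => o /mapP [? _ ->].
split.
- rewrite pmap_cat; elim: x => [|a x IH] /=; first by elim: y.
  by rewrite IH.
- rewrite pmap_cat; elim: x => [|a x IH] /=; last by [].
  by elim: y => [|b y IH] //=; rewrite IH.
Qed.

Definition ed_pred (x y : seq Sigma) : pred nat :=
  fun n => `[< exists p, edit_path p x y /\ wgt p = n >].

Lemma ed_exists x y : exists n, ed_pred x y n.
Proof.
exists (wgt (trivial_path x y)); apply/asboolP.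
by exists (trivial_path x y); split => //; apply: trivial_path_ok.
Qed.

Definition ed (x y : seq Sigma) : nat := ex_minn (ed_exists x y).

Variable R : realType.
Local Open Scope ring_scope.

(* ned(x,y) = min_p wgt(p)/|p|, with ned(ε,ε) = 0; the set of edit paths
   between x and y is finite and nonempty, so the min is the infimum *)
Definition ned (x y : seq Sigma) : R :=
  if (x == [::]) && (y == [::]) then 0
  else inf [set r : R | exists p, edit_path p x y /\
                        r = (wgt p)%:R / (size p)%:R].

Definition ged (x y : seq Sigma) : R :=
  if (x == [::]) && (y == [::]) then 0
  else (2 * (ed x y)%:R) / ((size x)%:R + (size y)%:R + (ed x y)%:R).

End EditDistance.

(* Main.v *)
Require Import Defs.
From mathcomp Require Import all_boot all_order all_algebra.
From mathcomp Require Import boolp classical_sets reals.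
From mathcomp Require Import zify.
Import Order.TTheory GRing.Theory Num.Theory.
Local Open Scope ring_scope.

Lemma path_size_bound (Sigma : finType) (p : seq (edit_op Sigma)) :
  all (@valid_op Sigma) p ->
  (2 * size p <= size (concat_opt (map fst p)) + size (concat_opt (map snd p)) + wgt p)%N.
Proof.
elim: p => [|[a b] p IH] //= /andP [hv hp].
have := IH hp; rewrite /concat_opt /wgt /= => {}IH.
move: hv; rewrite /valid_op /=.
case: a => [a|]; case: b => [b|] //=; try case: eqP => _ /=; try lia.
Qed.

Theorem mainTheorem11 (Sigma : finType) (R : realType) (x y : seq Sigma) :
  ged R x y <= ned R x y.
Proof.
rewrite /ged /ned; case: ifP => [_|hne]; first by [].
apply: lb_le_inf.
  exists ((wgt (trivial_path x y))%:R / (size (trivial_path x y))%:R).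
  by exists (trivial_path x y); split => //; apply: trivial_path_ok.
move=> r [p [[hv [hx hy]] ->]].
have hb := @path_size_bound Sigma p hv; rewrite hx hy in hb.
have hed : (ed x y <= wgt p)%N.
  rewrite /ed; case: ex_minnP => m _ hmin; apply: hmin.
  by apply/asboolP; exists p.
have hL : (0 < size x + size y)%N.
  move/negbT: hne; rewrite negb_and -!size_eq0 -!lt0n. case/orP => h; rewrite addn_gt0 h ?orbT //.
have hn : (0 < size p)%N.
  by rewrite lt0n size_eq0; apply/eqP => p0; move: hL; rewrite -hx -hy p0.
set e := ed x y in hed *; set w := wgt p in hb hed *; set n := size p in hb hn *.
have key : (2 * e * n <= w * (size x + size y + e))%N by nia.
rewrite ler_pdivrMr ?ltr0n ?addn_gt0 ?hL //; last by rewrite -!natrD ltr0n; lia.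
rewrite mulrAC ler_pdivlMr ?ltr0n //.
by rewrite -!natrD -!natrM ler_nat; lia.
Qed.
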